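(* Consider the discrete-time fractional-order system $\Delta^{\alpha}x[k+1]=Ax[k]+Bu[k]$, $y[k]=Cx[k]$, with state $x[k]\in\mathbb{R}^n$, unknown input $u[k]\in\mathbb{R}^p$ ($p<n$), and matrices $A\in\mathbb{R}^{n\times n}$, $B\in\mathbb{R}^{n\times p}$, $C$ with $n$ columns, where $\Delta^{\alpha_i}x_i[k]=\sum_{j=0}^{k}\psi(\alpha_i,j)x_i[k-j]$. Let $K\ge 1$ and define $\Theta$ and $\Xi$ as in the context. Then the system is perfectly observable after $K$ measurements if and only if $\operatorname{rank}([\Theta\ \ \Xi])=n+(K-1)p$.
   Context: $\psi(\alpha_i,j)=\frac{\Gamma(j-\alpha_i)}{\Gamma(-\alpha_i)\Gamma(j+1)}$, $D(\alpha,j)=\operatorname{diag}(\psi(\alpha_1,j),\dots,\psi(\alpha_n,j))$, $A_0=A-D(\alpha,1)$, $A_j=-D(\alpha,j+1)$ for $j\ge1$, $G_0=I_n$, $G_k=\sum_{j=0}^{k-1}A_jG_{k-1-j}$ for $k\ge1$; the state satisfies $x[k]=G_kx[0]+\sum_{j=0}^{k-1}G_{k-1-j}Bu[j]$. Define $\Theta=[(CG_0)^T,(CG_1)^T,\dots,(CG_{K-1})^T]^T$ and $\Xi$ the $K\times K$ block lower-triangular matrix whose $(r,s)$ block ($r,s=1,\dots,K$) is $CG_{r-s-1}B$ if $r>s$ and $0$ otherwise (so the first block row and last block column are zero), so that $Y=\Theta x[0]+\Xi U$ with $Y=[y[0]^T,\dots,y[K-1]^T]^T$, $U=[u[0]^T,\dots,u[K-1]^T]^T$.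 The system is perfectly observable (after $K$ measurements) if, given $(\alpha,A,B,C)$ and the observations $y[0],\dots,y[K-1]$, it is possible to (uniquely) recover the initial state $x[0]$ and the unknown inputs $u[0],\dots,u[K-2]$. *)

(* Defs.v *)
From mathcomp Require Import all_boot all_order all_algebra.
From mathcomp Require Import reals.
Set Implicit Arguments. Unset Strict Implicit. Unset Printing Implicit Defensive.
Import Order.TTheory GRing.Theory Num.Theory.
Local Open Scope ring_scope.

Section FracSys.
Variables (R : realType) (n p q : nat).

(* psi(a,j) = Gamma(j-a)/(Gamma(-a) Gamma(j+1)) = prod_{i<j} (i - a)/(i + 1)
   (the Gamma-ratio written out via Gamma(z+1) = z Gamma(z)). *)
Definition psi (a : R) (j : nat) : R :=
  \prod_(i < j) ((i%:R - a) / (i.+1)%:R).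

Definition Dmx (alpha : 'I_n -> R) (j : nat) : 'M[R]_n :=
  diag_mx (\row_i psi (alpha i) j).

Definition Acoef (alpha : 'I_n -> R) (A : 'M[R]_n) (j : nat) : 'M[R]_n :=
  if j == 0%N then A - Dmx alpha 1 else - Dmx alpha j.+1.

Fixpoint Gseq (alpha : 'I_n -> R) (A : 'M[R]_n) (k : nat) : seq 'M[R]_n :=
  match k with
  | 0 => [:: 1%:M]
  | k'.+1 => let s := Gseq alpha A k' in
      rcons s (\sum_(j < k'.+1) Acoef alpha A j *m nth 0 s (k' - j)%N)
  end.

Definition Gmx (alpha : 'I_n -> R) (A : 'M[R]_n) (k : nat) : 'M[R]_n :=
  nth 0 (Gseq alpha A k) k.

Definition Theta (alpha : 'I_n -> R) (A : 'M[R]_n) (C : 'M[R]_(q, n)) (K : nat)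
  : 'M[R]_(\sum_(r < K) q, n) :=
  \mxcol_(r < K) (C *m Gmx alpha A r).

Definition Xi (alpha : 'I_n -> R) (A : 'M[R]_n) (B : 'M[R]_(n, p))
  (C : 'M[R]_(q, n)) (K : nat) : 'M[R]_(\sum_(r < K) q, \sum_(s < K) p) :=
  \mxblock_(r < K, s < K)
    (if (s < r)%N then C *m Gmx alpha A (r - s - 1)%N *m B else 0 : 'M[R]_(q, p)).

Definition frac_diff (alpha : 'I_n -> R) (x : nat -> 'cV[R]_n) (k : nat) : 'cV[R]_n :=
  \col_i (\sum_(j < k.+1) psi (alpha i) j * x (k - j)%N i 0).

Definition is_trajectory (alpha : 'I_n -> R) (A : 'M[R]_n) (B : 'M[R]_(n, p))
  (x : nat -> 'cV[R]_n) (u : nat -> 'cV[R]_p) : Prop :=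
  forall k, frac_diff alpha x k.+1 = A *m x k + B *m u k.

Definition perfectly_observable (alpha : 'I_n -> R) (A : 'M[R]_n)
  (B : 'M[R]_(n, p)) (C : 'M[R]_(q, n)) (K : nat) : Prop :=
  forall (x x' : nat -> 'cV[R]_n) (u u' : nat -> 'cV[R]_p),
    is_trajectory alpha A B x u -> is_trajectory alpha A B x' u' ->
    (forall k, (k < K)%N -> C *m x k = C *m x' k) ->
    x 0%N = x' 0%N /\ (forall j, (j < K.-1)%N -> u j = u' j).

End FracSys.

(* Main.v *)
Require Import Defs.
From mathcomp Require Import all_boot all_order all_algebra.
From mathcomp Require Import reals.
From mathcomp Require Import zify.
Set Implicit Arguments. Unset Strict Implicit. Unset Printing Implicit Defensive.
Import Order.TTheory GRing.Theory Num.Theory.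
Local Open Scope ring_scope.

Section Aux.
Variables (R : realType) (n p q : nat) (alpha : 'I_n -> R)
  (A : 'M[R]_n) (B : 'M[R]_(n, p)) (C : 'M[R]_(q, n)).

Lemma psi0 (a : R) : psi a 0 = 1.
Proof. by rewrite /psi big_ord0. Qed.

Lemma Gseq_size k : size (Gseq alpha A k) = k.+1.
Proof. by elim: k => //= k IH; rewrite size_rcons IH. Qed.

Lemma nth_Gseq k i : (i <= k)%N -> nth 0 (Gseq alpha A k) i = Gmx alpha A i.
Proof.
elim: k => [|k IH]; first by rewrite leqn0 => /eqP ->.
rewrite leq_eqVlt => /orP[/eqP ->//|lik].
by rewrite /= nth_rcons Gseq_size lik IH.
Qed.

Lemma Gmx0 : Gmx alpha A 0 = 1%:M.
Proof. by []. Qed.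

Lemma GmxS k : Gmx alpha A k.+1 =
  \sum_(j < k.+1) Acoef alpha A j *m Gmx alpha A (k - j).
Proof.
rewrite /Gmx /= nth_rcons Gseq_size ltnn eqxx.
by apply: eq_bigr => j _; rewrite nth_Gseq // leq_subr.
Qed.

Lemma Dmx_mul j (v : 'cV[R]_n) i : (Dmx alpha j *m v) i 0 = psi (alpha i) j * v i 0.
Proof. by rewrite /Dmx mul_diag_mx !mxE. Qed.

Lemma frac_Acoef (x : nat -> 'cV[R]_n) k :
  frac_diff alpha x k.+1 - A *m x k =
  x k.+1 - \sum_(j < k.+1) Acoef alpha A j *m x (k - j)%N.
Proof.
set S := \sum_(j < k.+1) Dmx alpha j.+1 *m x (k - j)%N.
have h1 : frac_diff alpha x k.+1 = x k.+1 + S.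
  apply/matrixP => i l; rewrite !ord1 !mxE big_ord_recl psi0 mul1r subn0 summxE.
  congr (_ + _); apply: eq_bigr => j _; rewrite Dmx_mul /=.
  by rewrite subSS.
have h2 : \sum_(j < k.+1) Acoef alpha A j *m x (k - j)%N = A *m x k - S.
  rewrite /S !big_ord_recl /= subn0 /Acoef /= mulmxBl opprD addrA.
  congr (_ + _); rewrite -sumrN; apply: eq_bigr => j _.
  by rewrite mulNmx.
rewrite h1 h2 opprB; by rewrite addrAC -addrA [S + _]addrC addrA.
Qed.

Lemma traj_iff (x : nat -> 'cV[R]_n) (u : nat -> 'cV[R]_p) :
  is_trajectory alpha A B x u <->
  forall k, x k.+1 = \sum_(j < k.+1) Acoef alpha A j *m x (k - j)%N + B *m u k.
Proof.
split => H k.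
- rewrite -[x k.+1](subrK (\sum_(j < k.+1) Acoef alpha A j *m x (k - j)%N)).
  by rewrite -frac_Acoef (H k) [A *m x k + _]addrC addrK addrC.
- by apply/eqP; rewrite addrC -subr_eq frac_Acoef (H k) addrC addKr.
Qed.

Definition xform (x0 : 'cV[R]_n) (u : nat -> 'cV[R]_p) (k : nat) : 'cV[R]_n :=
  Gmx alpha A k *m x0 + \sum_(s < k) Gmx alpha A (k - s.+1) *m B *m u s.

Lemma tri_swap (V : zmodType) k (F : nat -> nat -> V) :
  \sum_(s < k) \sum_(j < (k - s.+1).+1) F j s = \sum_(j < k.+1) \sum_(s < k - j) F j s.
Proof.
transitivity (\sum_(s < k.+1) \sum_(j < k.+1) if (j + s < k)%N then F j s else 0 : V).
  rewrite big_ord_recr /= [X in _ = _ + X]big1 ?addr0; last first.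
    by move=> j _; case: ifP => // h; exfalso; move: h => /=; lia.
  apply: eq_bigr => s _; have side : ((k - s.+1).+1 <= k.+1)%N by have := ltn_ord s; lia.
  rewrite (big_ord_widen k.+1 (fun j => F j s) side).
  rewrite big_mkcond; apply: eq_bigr => j _.
  by have -> : (j < (k - s.+1).+1)%N = (j + s < k)%N by have := ltn_ord s; lia.
rewrite exchange_big /=; apply: eq_bigr => j _.
have side : (k - j <= k.+1)%N by lia.
rewrite (big_ord_widen k.+1 (fun s => F j s) side) [RHS]big_mkcond; apply: eq_bigr => s _.
by have -> : (s < k - j)%N = (j + s < k)%N by lia.
Qed.

Lemma xform_rec x0 u k : xform x0 u k.+1 =
  \sum_(j < k.+1) Acoef alpha A j *m xform x0 u (k - j)%N + B *m u k.
Proof.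
rewrite /xform GmxS mulmx_suml.
under [X in _ = X + _]eq_bigr do rewrite mulmxDr.
rewrite big_split /= -addrA; congr (_ + _); first by apply: eq_bigr => j _; rewrite mulmxA.
rewrite big_ord_recr /= subSS subnn Gmx0 mul1mx; congr (_ + _).
under eq_bigr => s _ do rewrite subSS -(subnSK (ltn_ord s)) GmxS mulmx_suml mulmx_suml.
under [RHS]eq_bigr => j _ do rewrite mulmx_sumr.
rewrite (@tri_swap _ k (fun j s => Acoef alpha A j *m Gmx alpha A (k - s.+1 - j) *m B *m u s)); apply: eq_bigr => j _; apply: eq_bigr => s _.
by rewrite !mulmxA subnS subnAC -subnS.
Qed.

Lemma traj_xform x u : is_trajectory alpha A B x u -> forall k, x k = xform (x 0%N) u k.
Proof.
move/traj_iff => H k; elim: k {-2}k (leqnn k) => [|m IH] k.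
  rewrite leqn0 => /eqP ->; by rewrite /xform big_ord0 addr0 Gmx0 mul1mx.
rewrite leq_eqVlt => /orP[/eqP ->|]; last exact: IH.
rewrite H xform_rec; congr (_ + _); apply: eq_bigr => j _.
by rewrite IH // leq_subr.
Qed.

Lemma xform_traj x0 u : is_trajectory alpha A B (xform x0 u) u.
Proof. by apply/traj_iff => k; rewrite xform_rec. Qed.

Lemma xformB x0 x1 u u1 k : xform x0 u k - xform x1 u1 k =
  xform (x0 - x1) (fun s => u s - u1 s) k.
Proof.
rewrite /xform mulmxBr opprD addrACA; congr (_ + _).
by rewrite -sumrB; apply: eq_bigr => s _; rewrite mulmxBr.
Qed.

Lemma xform_at0 x0 u : xform x0 u 0 = x0.
Proof. by rewrite /xform big_ord0 addr0 Gmx0 mul1mx. Qed.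

End Aux.
Lemma Mvec (R : realType) (n p q : nat) (alpha : 'I_n -> R)
  (A : 'M[R]_n) (B : 'M[R]_(n, p)) (C : 'M[R]_(q, n)) (K : nat) x0
  (u : nat -> 'cV[R]_p) :
  row_mx (Theta alpha A C K) (Xi alpha A B C K) *m col_mx x0 (\mxcol_(s < K) u s)
  = \mxcol_(r < K) (C *m xform alpha A B x0 u r).
Proof.
rewrite mul_row_col /Theta /Xi mxcol_mul mul_mxblock_mxrow -mxcolD; apply: eq_mxcol => r.
rewrite /xform mulmxDr mulmxA; congr (_ + _).
rewrite mulmx_sumr (big_ord_widen K (fun s => C *m (Gmx alpha A (r - s.+1) *m B *m u s)) (ltnW (ltn_ord r))).
rewrite [RHS]big_mkcond /=; apply: eq_bigr => s _; case: ifP => _; rewrite ?mul0mx //.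
by rewrite !mulmxA subn1 subnS.
Qed.

Theorem proposition2 (R : realType) (n p q : nat) (alpha : 'I_n -> R)
  (A : 'M[R]_n) (B : 'M[R]_(n, p)) (C : 'M[R]_(q, n)) (K : nat) :
  (p < n)%N -> (1 <= K)%N ->
  perfectly_observable alpha A B C K <->
  \rank (row_mx (Theta alpha A C K) (Xi alpha A B C K)) = (n + (K - 1) * p)%N.
Proof.
move=> _ hK.
set M := row_mx _ _.
have sumK : (\sum_(s < K) p)%N = (K * p)%N by rewrite sum_nat_const card_ord.
have lastP : (K.-1 < K)%N by rewrite ltn_predL.
pose last : 'I_K := Ordinal lastP.
pose W := \mxcol_(s < K) (if s == last then 1%:M else 0 : 'M[R]_p).
pose V := col_mx (0 : 'M[R]_(n, p)) W.
pose Ker := kermx M^T.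
have MV : M *m V = 0.
  rewrite /M /V mul_row_col mulmx0 add0r /Xi /W mul_mxblock_mxrow -mxcol0.
  apply: eq_mxcol => r; apply: big1 => s _.
  case: ifP => h1; case: eqP => h2; rewrite ?mulmx0 ?mul0mx //.
  exfalso; move: h1; rewrite h2 /=; have := ltn_ord r; lia.
have EK : (V^T <= Ker)%MS by rewrite sub_kermx -trmx_mul MV trmx0.
have rE : \rank V^T = p.
  have VV : V^T *m V = 1%:M.
    rewrite /V tr_col_mx mul_row_col trmx0 mul0mx add0r /W tr_mxcol mul_mxrow_mxcol.
    rewrite (bigD1 last) //= eqxx trmx1 mulmx1 big1 ?addr0 // => s /negbTE ->.
    by rewrite trmx0 mul0mx.
  apply/eqP; rewrite eqn_leq rank_leq_row /=.
  by have := mxrankM_maxl V^T V; rewrite VV mxrank1.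
have rK : \rank Ker = (n + \sum_(s < K) p - \rank M)%N by rewrite mxrank_ker mxrank_tr.
have rM := rank_leq_col M.
have pK : (p <= K * p)%N by rewrite leq_pmull.
have eqv : (Ker <= V^T)%MS = (\rank V^T == \rank Ker) := esym (mxrank_leqif_sup EK).2.
have key : perfectly_observable alpha A B C K <-> (Ker <= V^T)%MS.
have x00 : forall k, xform alpha A B 0 (fun _ => 0) k = 0.
    move=> k; rewrite /xform mulmx0 add0r big1 // => s _; by rewrite mulmx0.
  have WE : forall Z : 'M[R]_(p, 1), V *m Z = col_mx 0 (\mxcol_(s < K) (if s == last then Z else 0)).
    move=> Z; rewrite /V mul_col_mx mul0mx /W mxcol_mul; congr col_mx; apply: eq_mxcol => s.
    by case: eqP => _; rewrite ?mul1mx ?mul0mx.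
  split.
  - move=> obs; apply/row_subP => i.
    set w := row i Ker.
    have wM : M *m w^T = 0.
      by rewrite -[M]trmxK -trmx_mul /w -row_mul mulmx_ker row0 trmx0.
    set v := w^T.
    pose x0 := usubmx v.
    pose U := fun s : 'I_K => submxcol (dsubmx v) s.
    pose u := fun k : nat => U (insubd last k).
    have hU : forall s : 'I_K, u s = U s.
      by move=> s; rewrite /u; congr U; apply: val_inj; rewrite val_insubd ltn_ord.
    have vE : v = col_mx x0 (\mxcol_(s < K) u s).
      by rewrite (eq_mxcol hU) submxcolK vsubmxK.
    have Mv0 := wM; rewrite -/v vE Mvec in Mv0.
    have hy : forall k, (k < K)%N -> C *m xform alpha A B x0 u k =
        C *m xform alpha A B 0 (fun _ => 0) k.
      move=> k hk; have := congr1 (fun X => submxcol X (Ordinal hk)) Mv0.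
      by rewrite /= mxcolK submxcol0 x00 mulmx0.
    have [h0 hu] := obs _ _ _ _ (xform_traj alpha A B x0 u)
       (xform_traj alpha A B 0 (fun _ => 0)) hy.
    rewrite !xform_at0 in h0.
    have vE2 : v = V *m u last.
      rewrite WE vE h0; congr col_mx; apply: eq_mxcol => s.
      case: eqP => [->//|ne]; apply: hu; have := ltn_ord s.
      have : nat_of_ord s != K.-1 by apply/eqP => e; apply: ne; apply: val_inj.
      lia.
    by rewrite -[w]trmxK -/v vE2 trmx_mul submxMl.
  - move=> sub x x' u u' tx tx' hy.
    have hx := traj_xform tx; have hx' := traj_xform tx'.
    pose d0 := x 0%N - x' 0%N; pose e := fun s => u s - u' s.
    pose v := col_mx d0 (\mxcol_(s < K) e s).
    have Mv : M *m v = 0.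
      rewrite /M /v Mvec -mxcol0; apply: eq_mxcol => r.
      by rewrite -xformB -hx -hx' mulmxBr hy ?subrr.
    have vK : (v^T <= Ker)%MS by rewrite sub_kermx -trmx_mul Mv trmx0.
    have /submxP [D hD] := submx_trans vK sub.
    have vV : v = V *m D^T by rewrite -[v]trmxK hD trmx_mul trmxK.
    rewrite WE in vV.
    split.
      by apply/subr0_eq; have := congr1 usubmx vV; rewrite !col_mxKu.
    move=> j hj; apply/subr0_eq.
    have hjK : (j < K)%N by lia.
    have := congr1 (fun X => submxcol (dsubmx X) (Ordinal hjK)) vV.
    rewrite /= !col_mxKd !mxcolK; case: eqP => // /(congr1 val) /=; lia.
rewrite key eqv rE rK; move: (\rank M) rM => r; rewrite sumK mulnBl mul1n => rM; split.
  by move/eqP; lia.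
by move=> h; apply/eqP; lia.
Qed.
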